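(* Let $R>0$, $b\in\mathbb{R}^n\setminus\{0\}$, $a=\frac{|b|^2-R^2}{|b|^2}b$, and on $P=\{x:2|b|^2-R^2-2\langle b,x\rangle>0\}$ let $f(x)=\frac{|b|^2|x-a|^2}{2|b|^2-R^2-2\langle b,x\rangle}$. Let $k\ge2$ and let $\Sigma$ be a smooth $k$-dimensional submanifold of $P\setminus\{a\}$. Define on $\Sigma$ the vector field $$W(x)=\frac1k f(x)^{-\frac k2}(x-a)-F(f(x))\frac{b}{|b|^2},\qquad F(t)=\begin{cases}\frac{1}{k-2}t^{-\frac{k-2}{2}},&k\ge3,\\ -\frac12\log t,&k=2.\end{cases}$$ Then $$\operatorname{div}_\Sigma W=f^{-\frac k2}\frac{|(x-a)^\perp|^2}{|x-a|^2}+f^{-\frac{k-4}{2}}\frac{|b^\top|^2}{|b|^4|x-a|^2}.$$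
   Context: $\operatorname{div}_\Sigma X=\sum_{i=1}^k\langle D_{e_i}X,e_i\rangle$ for an orthonormal basis $e_i$ of $T_x\Sigma$ (tangential divergence of an ambient vector field along $\Sigma$). $X^\top$ is the orthogonal projection of $X$ onto $T_x\Sigma$ and $X^\perp=X-X^\top$. *)

(* Defs.v *)
From HB Require Import structures.
From mathcomp Require Import all_boot all_order all_algebra.
From mathcomp Require Import all_classical all_reals all_analysis.
Set Implicit Arguments. Unset Strict Implicit. Unset Printing Implicit Defensive.
Import Order.TTheory GRing.Theory Num.Theory.
Import numFieldNormedType.Exports.
Local Open Scope ring_scope.

Definition dotv {R : realType} {n : nat} (u v : 'rV[R]_n) : R :=
  \sum_(i < n) u 0 i * v 0 i.
Definition nsq {R : realType} {n : nat} (u : 'rV[R]_n) : R := dotv u u.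

(* e : 'I_k -> 'rV_n is an orthonormal family (basis of a k-dim subspace T). *)
Definition orthonormal_fam {R : realType} {n k : nat} (e : 'I_k -> 'rV[R]_n) : Prop :=
  forall i j, dotv (e i) (e j) = (i == j)%:R.

Definition tproj {R : realType} {n k : nat} (e : 'I_k -> 'rV[R]_n) (X : 'rV[R]_n)
  : 'rV[R]_n := \sum_(i < k) dotv X (e i) *: e i.
Definition nproj {R : realType} {n k : nat} (e : 'I_k -> 'rV[R]_n) (X : 'rV[R]_n)
  : 'rV[R]_n := X - tproj e X.

(* tangential divergence of an ambient field W at x along span(e) *)
Definition divT {R : realType} {n k : nat} (e : 'I_k -> 'rV[R]_n)
  (W : 'rV[R]_n -> 'rV[R]_n) (x : 'rV[R]_n) : R :=
  \sum_(i < k) dotv ('D_(e i) W x) (e i).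

Definition ptA {R : realType} {n : nat} (Rad : R) (b : 'rV[R]_n) : 'rV[R]_n :=
  ((nsq b - Rad ^+ 2) / nsq b) *: b.
Definition denP {R : realType} {n : nat} (Rad : R) (b x : 'rV[R]_n) : R :=
  2 * nsq b - Rad ^+ 2 - 2 * dotv b x.
Definition fB {R : realType} {n : nat} (Rad : R) (b x : 'rV[R]_n) : R :=
  nsq b * nsq (x - ptA Rad b) / denP Rad b x.
Definition FF {R : realType} (k : nat) (t : R) : R :=
  if (3 <= k)%N then (k%:R - 2)^-1 * t `^ (- ((k%:R - 2) / 2))
  else - (1 / 2) * ln t.
Definition WB {R : realType} {n : nat} (k : nat) (Rad : R) (b x : 'rV[R]_n)
  : 'rV[R]_n :=
  ((k%:R)^-1 * fB Rad b x `^ (- (k%:R / 2))) *: (x - ptA Rad b)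
  - (FF k (fB Rad b x) / nsq b) *: b.

(* Main.v *)
Require Import Defs.
From HB Require Import structures.
From mathcomp Require Import all_boot all_order all_algebra.
From mathcomp Require Import all_classical all_reals all_analysis.
From mathcomp Require Import ring lra.
Import Order.TTheory GRing.Theory Num.Theory.
Import numFieldNormedType.Exports.
Local Open Scope ring_scope.
Local Open Scope classical_set_scope.

Section Helpers.
Context {R : realType}.

Lemma is_derive_line (V W : normedModType R) (F : V -> W) x v (c d : W) :
 (forall h : R, h != 0 -> h^-1 *: (F (h *: v + x) - F x) = c + h *: d) ->
 is_derive x v F c.
Proof.
move=> H.
have cv : (fun h : R => h^-1 *: (F (h *: v + x) - F x)) @ 0^' --> c.
  apply: (@cvg_trans _ ((fun h : R => c + h *: d) @ 0^')).
    apply: near_eq_cvg; near=> h; rewrite H //.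
    near: h; exact: nbhs_dnbhs_neq.
  suff : (fun h : R => c + h *: d) @ 0^' --> c + 0 *: d by rewrite scale0r addr0.
  apply: cvgD; first exact: cvg_cst.
  apply: cvgZr_tmp.
  apply: cvg_within_filter; exact: cvg_id.
split; first by apply/cvg_ex; exists c.
exact: cvg_lim.
Unshelve. all: by end_near. Qed.

Lemma derive_line (V W : normedModType R) (G : V -> W) x v :
  'D_v G x = 'D_1 (fun h : R => G (h *: v + x)) 0.
Proof.
rewrite /derive [X in _ = lim (X @ _)](_ : _ = (fun h : R => h^-1 *: (G (h *: v + x) - G x))) //.
apply: funext => h /=.
by rewrite scale0r add0r addr0 -[h%:A]/(h * 1) mulr1.
Qed.

Lemma is_derive_chain {V : normedModType R} {f : V -> R} {g : R -> R} {x v df dg} :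
  is_derive (f x) 1 g dg -> is_derive x v f df ->
  is_derive x v (fun y => g (f y)) (dg * df).
Proof.
move=> Hg [fd <-].
pose F := fun h : R => f (h *: v + x).
have HF : is_derive (0:R) (1:R) F ('D_v f x).
  split; first exact/(derivable1P _ _ _).1.
  by rewrite [RHS]derive_line.
have HF0 : F 0 = f x by rewrite /F scale0r add0r.
rewrite -HF0 in Hg.
have := is_derive1_comp Hg HF => -[dgF eq].
split; first by apply/derivable1P.
by rewrite derive_line -eq.
Qed.


Lemma is_derive_scalef {V W : normedModType R} {a : V -> R} {w : V -> W} {x v da dw} :
  is_derive x v a da -> is_derive x v w dw ->
  is_derive x v (fun y => a y *: w y) (a x *: dw + da *: w x).
Proof.
move=> [df <-] [dg <-].
have cv : (fun h : R => h^-1 *: ((fun y => a y *: w y) (h *: v + x) - a x *: w x)) @ 0^'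
   --> a x *: 'D_v w x + 'D_v a x *: w x.
  evar (fg : R -> W); rewrite [X in X @ _](_ : _ = fg) /=; last first.
    rewrite funeqE => h.
    have -> : a (h *: v + x) *: w (h *: v + x) - a x *: w x =
      a (h *: v + x) *: (w (h *: v + x) - w x) + (a (h *: v + x) - a x) *: w x.
      by rewrite scalerBr scalerBl addrA subrK.
    rewrite scalerDr scalerA mulrC -scalerA.
    by rewrite [_ *: ((_ - _) *: w x)]scalerA /fg.
  apply: cvgD; last exact: cvgZr_tmp df.
  apply: cvg_comp2 (@scale_continuous _ _ (_, _)) => /=; last exact: dg.
  suff : {for 0, continuous (fun h : R => a (h *: v + x))}.
    by move=> /continuous_withinNx; rewrite scale0r add0r.
  exact/differentiable_continuous/derivable1_diffP/(derivable1P _ _ _).1.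
split; first by apply/cvg_ex; eexists; exact: cv.
exact: cvg_lim.
Qed.


Section Dot.
Context {n : nat}.
Implicit Types u w z : 'rV[R]_n.

Lemma dotvC u w : dotv u w = dotv w u.
Proof. by apply: eq_bigr => i _; rewrite mulrC. Qed.

Lemma dotvDl u w z : dotv (u + w) z = dotv u z + dotv w z.
Proof. by rewrite /dotv -big_split; apply: eq_bigr => i _; rewrite !mxE mulrDl. Qed.

Lemma dotvZl (c : R) u z : dotv (c *: u) z = c * dotv u z.
Proof. by rewrite /dotv mulr_sumr; apply: eq_bigr => i _; rewrite !mxE mulrA. Qed.

Lemma dotvNl u z : dotv (- u) z = - dotv u z.
Proof. by rewrite -scaleN1r dotvZl mulN1r. Qed.

Lemma dotvBl u w z : dotv (u - w) z = dotv u z - dotv w z.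
Proof. by rewrite dotvDl dotvNl. Qed.

Lemma dotvDr u w z : dotv z (u + w) = dotv z u + dotv z w.
Proof. by rewrite dotvC dotvDl !(dotvC z). Qed.

Lemma dotvZr (c : R) u z : dotv z (c *: u) = c * dotv z u.
Proof. by rewrite dotvC dotvZl dotvC. Qed.

Lemma dotvBr u w z : dotv z (u - w) = dotv z u - dotv z w.
Proof. by rewrite dotvC dotvBl !(dotvC z). Qed.

Lemma dotv_suml k (f : 'I_k -> 'rV[R]_n) z :
  dotv (\sum_(i < k) f i) z = \sum_(i < k) dotv (f i) z.
Proof.
elim/big_ind2: _ => //; last by move=> *; rewrite dotvDl; congr (_ + _).
by rewrite /dotv big1 // => i _; rewrite mxE mul0r.
Qed.

Lemma dotv_sumr k (f : 'I_k -> 'rV[R]_n) z :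
  dotv z (\sum_(i < k) f i) = \sum_(i < k) dotv z (f i).
Proof. by rewrite dotvC dotv_suml; apply: eq_bigr => i _; rewrite dotvC. Qed.

Lemma nsq_ge0 u : 0 <= nsq u.
Proof. by apply: sumr_ge0 => i _; rewrite -expr2 sqr_ge0. Qed.

Lemma nsq_gt0 u : u != 0 -> 0 < nsq u.
Proof.
move=> u0; rewrite lt_def nsq_ge0 andbT; apply: contra u0 => /eqP H.
have H' : \sum_(i < n) u 0 i ^+ 2 = 0 
  by rewrite -[RHS]H; apply: eq_bigr => i _; rewrite expr2.
have H0 := psumr_eq0P (fun i _ => sqr_ge0 (u 0 i)) H'.
apply/eqP/rowP => j; rewrite mxE; apply/eqP; rewrite -sqrf_eq0; apply/eqP.
exact: H0.
Qed.

Lemma nsqD u w : nsq (u + w) = nsq u + 2 * dotv u w + nsq w.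
Proof. rewrite /nsq dotvDl !dotvDr (dotvC w u); ring. Qed.


Lemma is_derive_dot (u x v : 'rV[R]_n) :
  is_derive x v (fun y => dotv u y) (dotv u v).
Proof.
apply: (@is_derive_line _ _ _ _ _ _ 0) => h h0.
rewrite dotvDr dotvZr addrK scaler0 addr0 /GRing.scale /=.
by rewrite mulrA mulVf // mul1r.
Qed.

Lemma is_derive_nsqB (a x v : 'rV[R]_n) :
  is_derive x v (fun y => nsq (y - a)) (2 * dotv (x - a) v).
Proof.
apply: (@is_derive_line _ _ _ _ _ _ (nsq v)) => h h0.
rewrite -addrA nsqD addrK /nsq dotvZl dotvZr dotvZl /GRing.scale /=.
rewrite (dotvC (x - a)).
field; exact: h0.
Qed.

Lemma is_derive_subc (a x v : 'rV[R]_n) :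
  is_derive x v (fun y => y - a) v.
Proof.
apply: (@is_derive_line _ _ _ _ _ _ 0) => h h0.
by rewrite opprB addrA subrK addrK scaler0 addr0 scalerA mulVf // scale1r.
Qed.


Lemma dotv_tproj k (e : 'I_k -> 'rV[R]_n) u i :
  orthonormal_fam e -> dotv (e i) (tproj e u) = dotv u (e i).
Proof.
move=> on; rewrite /tproj dotv_sumr (bigD1 i) //= big1 => [|j ji].
  by rewrite dotvZr on eqxx mulr1 addr0.
by rewrite dotvZr on eq_sym (negbTE ji) mulr0.
Qed.

Lemma nsq_tproj k (e : 'I_k -> 'rV[R]_n) u :
  orthonormal_fam e -> nsq (tproj e u) = \sum_(i < k) dotv u (e i) ^+ 2.
Proof.
move=> on; rewrite {1}/nsq {1}/tproj dotv_suml; apply: eq_bigr => i _.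
by rewrite dotvZl dotv_tproj // expr2.
Qed.

Lemma nsq_nproj k (e : 'I_k -> 'rV[R]_n) u :
  orthonormal_fam e -> nsq (nproj e u) = nsq u - \sum_(i < k) dotv u (e i) ^+ 2.
Proof.
move=> on.
have nN : forall w : 'rV[R]_n, nsq (- w) = nsq w.
  by move=> w; rewrite /nsq dotvNl dotvC dotvNl opprK.
rewrite /nproj nsqD nN nsq_tproj // dotvC dotvNl.
rewrite /tproj dotv_suml.
under eq_bigr do rewrite dotvZl dotvC.
rewrite (eq_bigr (fun i => dotv u (e i) ^+ 2)); last by move=> i _; rewrite expr2 dotvC.
set S := \sum_(i < k) _; ring.
Qed.

Lemma is_deriveV' (f : 'rV[R]_n -> R) x v df :
  f x != 0 -> is_derive x v f df ->
  is_derive x v (fun y => (f y)^-1) (- (f x) ^- 2 *: df).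
Proof.
move=> fx0 [H <-]; split; first exact: derivableV.
by rewrite deriveV.
Qed.

End Dot.

End Helpers.
Theorem mainTheorem6 (R : realType) (n k : nat) (Rad : R) (b x : 'rV[R]_n)
  (e : 'I_k -> 'rV[R]_n) :
  (2 <= k)%N -> 0 < Rad -> b != 0 ->
  0 < denP Rad b x -> x != ptA Rad b ->
  orthonormal_fam e ->
  divT e (WB k Rad b) x =
    fB Rad b x `^ (- (k%:R / 2)) * nsq (nproj e (x - ptA Rad b))
      / nsq (x - ptA Rad b)
  + fB Rad b x `^ (- ((k%:R - 4) / 2)) * nsq (tproj e b)
      / (nsq b ^+ 2 * nsq (x - ptA Rad b)).
Proof.
move=> k2 Rpos b0 dpos xa on.
set a := ptA Rad b.
have nbpos : 0 < nsq b := nsq_gt0 _ b0.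
have Ypos : 0 < nsq (x - a) by apply: nsq_gt0; rewrite subr_eq0.
set d := denP Rad b x.
have fpos : 0 < fB Rad b x by rewrite /fB divr_gt0 // mulr_gt0.
have kpos : 0 < k%:R :> R by rewrite ltr0n; apply: leq_trans k2.
have dD : forall v, is_derive x v (denP Rad b) (- (2 * dotv b v)).
  move=> v; apply: (@is_derive_line _ _ _ _ _ _ _ 0) => h h0.
  rewrite /denP dotvDr dotvZr scaler0 addr0 /GRing.scale /=.
  by field.
pose DF v := nsq b * (2 * dotv (x - a) v * d + nsq (x - a) * (2 * dotv b v)) / d ^+ 2.
have dF : forall v, is_derive x v (fB Rad b) (DF v).
  move=> v.
  have H1 : is_derive x v (fun y => nsq b * nsq (y - a)) (nsq b * (2 * dotv (x - a) v)).
    apply: is_derive_eq; first exact: (is_deriveM (is_derive_cst (nsq b) x v) (is_derive_nsqB a x v)).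
    by rewrite /GRing.scale /= mulr0 addr0.
  have H2 := is_deriveV' _ _ _ _ (lt0r_neq0 dpos) (dD v).
  have H3 := is_deriveM H1 H2.
  have -> : fB Rad b = (fun y => nsq b * nsq (y - a)) * (fun y => (denP Rad b y)^-1).
    by apply: funext => y; rewrite /fB.
  apply: (is_derive_eq H3).
  rewrite /DF /GRing.scale /= -/d; field; exact: lt0r_neq0.
set f := fB Rad b x.
pose p : R := - (k%:R / 2).
pose P := f `^ p.
have dFF : is_derive f 1 (FF k) (- (1 / 2) * P).
  case: (leqP 3 k) => k3.
    have -> : FF k = (fun t : R => (k%:R - 2)^-1 * t `^ (- ((k%:R - 2) / 2))).
      by apply: funext => t; rewrite /FF k3.
    have k3' : (3%:R <= k%:R :> R) by rewrite ler_nat.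
    have H := is_deriveM (is_derive_cst ((k%:R - 2)^-1 : R^o) f 1) (is_derive1_powR (- ((k%:R - 2) / 2)) fpos).
    apply: (is_derive_eq H).
    rewrite /GRing.scale /= mulr0 addr0 /P /p.
    have -> : - ((k%:R - 2) / 2) - 1 = - (k%:R / 2) :> R by field.
    field; lra.
  have -> : FF k = (fun t : R => - (1 / 2) * ln t).
    by apply: funext => t; rewrite /FF leqNgt k3.
  have k2e : k = 2%N by apply/eqP; rewrite eqn_leq k2 andbT -ltnS.
  have H := is_deriveM (is_derive_cst ((- (1 / 2)) : R^o) f 1) (is_derive1_ln fpos).
  apply: (is_derive_eq H).
  rewrite /GRing.scale /= mulr0 addr0 /P /p k2e.
  rewrite (_ : - (2%:R / 2) = -1 :> R); last by field.
  by rewrite powR_inv1 // ltW.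
have dA : forall v, is_derive x v (fun y => (k%:R)^-1 * fB Rad b y `^ p)
    ((k%:R)^-1 * (p * f `^ (p - 1)) * DF v).
  move=> v.
  have Hg := is_deriveM (is_derive_cst ((k%:R)^-1 : R^o) f 1) (is_derive1_powR p fpos).
  have := is_derive_chain Hg (dF v).
  move=> H; apply: (is_derive_eq H).
  by rewrite /GRing.scale /= mulr0 addr0.
have dB : forall v, is_derive x v (fun y => FF k (fB Rad b y) / nsq b)
    (- (1 / 2) * P / nsq b * DF v).
  move=> v.
  have Hg := is_deriveM dFF (is_derive_cst ((nsq b)^-1 : R^o) f 1).
  have := is_derive_chain Hg (dF v).
  move=> H; apply: (is_derive_eq H).
  rewrite /GRing.scale /= mulr0 add0r; ring.
have dW : forall v, is_derive x v (WB k Rad b)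
    (((k%:R)^-1 * P) *: v + ((k%:R)^-1 * (p * f `^ (p - 1)) * DF v) *: (x - a)
      - (- (1 / 2) * P / nsq b * DF v) *: b).
  move=> v.
  have H1 := is_derive_scalef (dA v) (is_derive_subc a x v).
  have H2 := is_derive_scalef (dB v) (is_derive_cst b x v).
  have -> : WB k Rad b = (fun y => ((k%:R)^-1 * fB Rad b y `^ p) *: (y - a))
     - (fun y => (FF k (fB Rad b y) / nsq b) *: b).
    by apply: funext => y; rewrite /WB.
  apply: (is_derive_eq (is_deriveB H1 H2)).
  by rewrite scaler0 add0r.
have fE : f = nsq b * nsq (x - a) / d by [].
have fp1 : f `^ (p - 1) = P / f.
  by rewrite powRB ?(lt0r_neq0 fpos) ?implybT // powRr1 // ltW.
have term : forall i, dotv ('D_(e i) (WB k Rad b) x) (e i) =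
   P / k%:R + (- (P / nsq (x - a))) * dotv (x - a) (e i) ^+ 2
   + (P * nsq (x - a) / d ^+ 2) * dotv b (e i) ^+ 2.
  move=> i; have [_ ->] := dW (e i).
  rewrite [in LHS]dotvBl [in LHS]dotvDl ![in LHS]dotvZl on eqxx /DF fp1 fE /p.
  rewrite (_ : true%:R = 1 :> R) // mulr1.
  field.
  by rewrite !lt0r_neq0.
rewrite /divT (eq_bigr _ (fun i _ => term i)) !big_split /= sumr_const card_ord.
rewrite -!mulr_sumr nsq_nproj // nsq_tproj //.
rewrite (_ : - ((k%:R - 4) / 2) = p + 2%:R); last by rewrite /p; field.
rewrite powRD ?(lt0r_neq0 fpos) ?implybT // powR_mulrn; last exact: ltW.
rewrite -/p -/P fE.
field.
by rewrite !lt0r_neq0.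
Qed.
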